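(* Let $G$ be a graph, let $\mathcal P$ be a set of pairwise distinguishable $(k+1)$-profiles of $G$ with $k=\kappa(\mathcal P,G)$, and let $(A_1,A_2),(B_1,B_2)\in\mathcal R(k,\mathcal P)$. Then there are two opposite corner separations of $(A_1,A_2)$ and $(B_1,B_2)$ that both lie in $\mathcal R(k,\mathcal P)$.
   Context: A separation of $G$ is an ordered pair $(A,B)$ of subsets of $V(G)$ with $A\cup B=V(G)$ and no edge between $A\setminus B$ and $B\setminus A$; its order is $|A\cap B|$. $(A,B)\le(C,D)$ means $A\subseteq C$, $D\subseteq B$. A profile is a set $P$ of separations with (P1) if $(C,D)\le(A,B)\in P$ then $(D,C)\notin P$, and (P2) if $(A,B),(C,D)\in P$ then $(B\cap D,A\cup C)\notin P$. For $\ell\in\mathbb N$, $P$ is an $\ell$-profile if all its separations have order $<\ell$ and for each separation $(A,B)$ of order $<\ell$, $(A,B)\in P$ or $(B,A)\in P$. A separation $(A,B)$ distinguishes profiles $P,P'$ if $(A,B)\in P,(B,A)\in P'$ or vice versa. $\kappa(\mathcal P,G)$ is the minimum order of a separation distinguishing two profiles of $\mathcal P$. $\mathcal R(k,\mathcal P)$ is the set of separations of finite order at most $k$ distinguishing two profiles of $\mathcal P$. For $\{E,E'\}=\{A_1,A_2\}$, $\{F,F'\}=\{B_1,B_2\}$ the corner separation of $E\cap F$ is $(E\cap F,E'\cup F')$; the corner separations $(E\cap F,E'\cup F')$ and $(E\cup F,E'\cap F')$ are called opposite. *)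

(* Defs.v *)
(* Graphs may be infinite: vertex type V arbitrary,
   vertex sets are predicates V -> Prop. *)
From Stdlib Require Import List Arith.
Import ListNotations.

Definition vset (V : Type) := V -> Prop.
Definition sepT (V : Type) := (vset V * vset V)%type.

Definition is_sep {V : Type} (adj : V -> V -> Prop) (s : sepT V) : Prop :=
  (forall x, fst s x \/ snd s x) /\
  (forall x y, adj x y ->
     ~ ((fst s x /\ ~ snd s x /\ snd s y /\ ~ fst s y) \/
        (snd s x /\ ~ fst s x /\ fst s y /\ ~ snd s y))).

Definition order_eq {V : Type} (s : sepT V) (n : nat) : Prop :=
  exists l : list V, NoDup l /\ length l = n /\
    forall x, (fst s x /\ snd s x) <-> In x l.

Definition order_lt {V : Type} (s : sepT V) (n : nat) : Prop :=
  exists m, m < n /\ order_eq s m.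

Definition sep_le {V : Type} (s t : sepT V) : Prop :=
  (forall x, fst s x -> fst t x) /\ (forall x, snd t x -> snd s x).

Definition inv {V : Type} (s : sepT V) : sepT V := (snd s, fst s).

Definition profile {V : Type} (adj : V -> V -> Prop) (P : sepT V -> Prop) : Prop :=
  (forall s, P s -> is_sep adj s) /\
  (forall s t, sep_le t s -> P s -> ~ P (inv t)) /\
  (forall s t, P s -> P t ->
     ~ P ((fun x => snd s x /\ snd t x), (fun x => fst s x \/ fst t x))).

Definition l_profile {V : Type} (adj : V -> V -> Prop) (l : nat)
    (P : sepT V -> Prop) : Prop :=
  profile adj P /\
  (forall s, P s -> order_lt s l) /\
  (forall s, is_sep adj s -> order_lt s l -> P s \/ P (inv s)).

Definition distinguishes {V : Type} (s : sepT V) (P P' : sepT V -> Prop) : Prop :=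
  (P s /\ P' (inv s)) \/ (P (inv s) /\ P' s).

Definition dist_in {V : Type} (fam : (sepT V -> Prop) -> Prop) (s : sepT V) : Prop :=
  exists P P', fam P /\ fam P' /\ distinguishes s P P'.

Definition pairwise_distinguishable {V : Type} (adj : V -> V -> Prop)
    (fam : (sepT V -> Prop) -> Prop) : Prop :=
  forall P P', fam P -> fam P' -> P <> P' ->
    exists s, is_sep adj s /\ distinguishes s P P'.

Definition is_kappa {V : Type} (adj : V -> V -> Prop)
    (fam : (sepT V -> Prop) -> Prop) (k : nat) : Prop :=
  (exists s, is_sep adj s /\ order_eq s k /\ dist_in fam s) /\
  (forall s m, is_sep adj s -> order_eq s m -> dist_in fam s -> k <= m).

Definition R_set {V : Type} (adj : V -> V -> Prop) (k : nat)
    (fam : (sepT V -> Prop) -> Prop) (s : sepT V) : Prop :=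
  is_sep adj s /\ (exists m, m <= k /\ order_eq s m) /\ dist_in fam s.

Definition sI {V : Type} (X Y : vset V) : vset V := fun x => X x /\ Y x.
Definition sU {V : Type} (X Y : vset V) : vset V := fun x => X x \/ Y x.

(* Main.v *)
Require Import Defs.
From Stdlib Require Import List Arith.
From Stdlib Require Import ClassicalEpsilon Lia.
Import ListNotations.

Section Aux.
Variable V : Type.

Definition dec (P : Prop) : {P} + {~ P} := excluded_middle_informative P.
Definition bit (P : V -> Prop) (x : V) : nat := if dec (P x) then 1 else 0.
Fixpoint cnt (P : V -> Prop) (L : list V) : nat :=
  match L with [] => 0 | x :: t => bit P x + cnt P t end.

Lemma filt (P : V -> Prop) : forall L, NoDup L -> exists l, NoDup l /\
  length l = cnt P L /\ forall x, In x l <-> (In x L /\ P x).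
Proof.
  induction L as [|x t IH]; intros Hnd.
  - exists []; split; [constructor|]; split; [reflexivity|]; simpl; tauto.
  - inversion Hnd as [|? ? Hx Ht]; subst.
    destruct (IH Ht) as [l [Hl [Hlen Hm]]].
    simpl; unfold bit; destruct (dec (P x)) as [p|np].
    + exists (x :: l); split; [constructor; [intro H; apply Hm in H; tauto|exact Hl]|].
      split; [simpl; lia|]. intros y; simpl; rewrite Hm.
      split; [intros [<-|[? ?]]; auto|intros [[<-|?] ?]; auto].
    + exists l; split; [exact Hl|]; split; [lia|]. intros y; rewrite Hm; simpl.
      split; [tauto|]. intros [[<-|?] ?]; tauto.
Qed.

Lemma len_unique (l1 l2 : list V) : NoDup l1 -> NoDup l2 ->
  (forall x, In x l1 <-> In x l2) -> length l1 = length l2.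
Proof.
  intros H1 H2 H; apply Nat.le_antisymm; apply NoDup_incl_length; auto;
  intros x; apply H.
Qed.

Lemma ord_of (P : V -> Prop) L : NoDup L -> (forall x, P x -> In x L) ->
  exists l, NoDup l /\ length l = cnt P L /\ forall x, P x <-> In x l.
Proof.
  intros Hnd Hin. destruct (filt P L Hnd) as [l [Hl [Hlen Hm]]].
  exists l; repeat split; auto; intros.
  - apply Hm; auto.
  - apply Hm; auto.
Qed.

Lemma ord_cnt (P : V -> Prop) L l : NoDup L -> (forall x, P x -> In x L) ->
  NoDup l -> (forall x, P x <-> In x l) -> length l = cnt P L.
Proof.
  intros Hnd Hin Hl Hm. destruct (ord_of P L Hnd Hin) as [l' [Hl' [Hlen Hm']]].
  rewrite <- Hlen. apply len_unique; auto. intros x; rewrite <- Hm, Hm'; tauto.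
Qed.

Lemma cnt_sum P1 P2 Q1 Q2 : forall L,
  (forall x, In x L -> bit P1 x + bit P2 x = bit Q1 x + bit Q2 x) ->
  cnt P1 L + cnt P2 L = cnt Q1 L + cnt Q2 L.
Proof.
  induction L as [|x t IH]; intros H; simpl; auto.
  assert (cnt P1 t + cnt P2 t = cnt Q1 t + cnt Q2 t) by (apply IH; intros; apply H; simpl; auto).
  specialize (H x (or_introl eq_refl)).
  lia.
Qed.

Lemma corner_orders (E E' F F' : vset V) a b :
  (forall x, E x \/ E' x) -> (forall x, F x \/ F' x) ->
  order_eq (E, E') a -> order_eq (F, F') b ->
  exists m1 m2, order_eq (sI E F, sU E' F') m1 /\
     order_eq (sU E F, sI E' F') m2 /\ m1 + m2 = a + b.
Proof.
  intros cE cF [lA [ndA [lenA memA]]] [lB [ndB [lenB memB]]].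
  simpl in memA, memB.
  set (L := nodup (fun x y => dec (x = y)) (lA ++ lB)).
  assert (ndL : NoDup L) by apply NoDup_nodup.
  assert (inL : forall x, In x lA \/ In x lB -> In x L).
  { intros x H; unfold L; rewrite nodup_In; apply in_or_app; exact H. }
  set (Pc := fun x => (E x /\ F x) /\ (E' x \/ F' x)).
  set (Pd := fun x => (E x \/ F x) /\ (E' x /\ F' x)).
  set (X := fun x => E x /\ E' x).
  set (Y := fun x => F x /\ F' x).
  assert (HX : forall x, X x -> In x L) by (intros x Hx; apply inL; left; apply memA; exact Hx).
  assert (HY : forall x, Y x -> In x L) by (intros x Hx; apply inL; right; apply memB; exact Hx).
  assert (HPc : forall x, Pc x -> In x L).
  { intros x [[e f] [e'|f']]; [apply HX|apply HY]; split; auto. }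
  assert (HPd : forall x, Pd x -> In x L).
  { intros x [[e|f] [e' f']]; [apply HX|apply HY]; split; auto. }
  destruct (ord_of Pc L ndL HPc) as [lc [ndc [lenc memc]]].
  destruct (ord_of Pd L ndL HPd) as [ld [ndd [lend memd]]].
  exists (cnt Pc L), (cnt Pd L). split; [|split].
  - exists lc; split; [auto|split; [auto|]]. exact memc.
  - exists ld; split; [auto|split; [auto|]]. exact memd.
  - rewrite (ord_cnt X L lA ndL HX ndA memA) in lenA.
    rewrite (ord_cnt Y L lB ndL HY ndB memB) in lenB.
    subst a b. apply cnt_sum. intros x _. unfold bit.
    destruct (dec (Pc x)), (dec (Pd x)), (dec (X x)), (dec (Y x)); try reflexivity;
    exfalso; unfold Pc, Pd, X, Y in *; destruct (cE x), (cF x); tauto.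
Qed.

Lemma is_sep_inv adj (s : sepT V) : is_sep adj s -> is_sep adj (inv s).
Proof.
  destruct s as [a b]; unfold is_sep, inv; simpl.
  intros [H1 H2]; split; [intros x; destruct (H1 x); tauto|].
  intros x y Hxy; specialize (H2 x y Hxy); tauto.
Qed.

Lemma corner_sep adj (E E' F F' : vset V) :
  is_sep adj (E, E') -> is_sep adj (F, F') -> is_sep adj (sI E F, sU E' F').
Proof.
  unfold is_sep, sI, sU; simpl. intros [cE aE] [cF aF]. split.
  - intros x; destruct (cE x), (cF x); tauto.
  - intros x y Hxy; specialize (aE x y Hxy); specialize (aF x y Hxy).
    destruct (cE x), (cF x), (cE y), (cF y); tauto.
Qed.

End Aux.

Lemma main_corner (V : Type) (adj : V -> V -> Prop)
  (fam : (sepT V -> Prop) -> Prop) (k : nat)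
  (Hprof : forall P, fam P -> l_profile adj (S k) P)
  (Hk : is_kappa adj fam k)
  (E E' F F' : vset V) a b
  (sA : is_sep adj (E, E')) (sB : is_sep adj (F, F'))
  (oA : order_eq (E, E') a) (oB : order_eq (F, F') b)
  (ha : a <= k) (hb : b <= k)
  (R1 R2 : sepT V -> Prop) (f1 : fam R1) (f2 : fam R2)
  (r1a : R1 (E', E)) (r1b : R1 (F', F)) (r2a : R2 (E, E')) (r2b : R2 (F, F')) :
  R_set adj k fam (sI E F, sU E' F') /\ R_set adj k fam (sU E F, sI E' F').
Proof.
  destruct sA as [cE aE0] eqn:HsA. destruct sB as [cF aF0] eqn:HsB.
  simpl in cE, cF.
  destruct (corner_orders V E E' F F' a b cE cF oA oB) as [m1 [m2 [o1 [o2 Hm]]]].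
  assert (sc : is_sep adj (sI E F, sU E' F')) by (apply corner_sep; auto).
  assert (sd : is_sep adj (sU E F, sI E' F')).
  { change (is_sep adj (inv (sI E' F', sU E F))). apply is_sep_inv, corner_sep;
    apply (is_sep_inv V adj (_, _)); auto. }
  destruct (Hprof R1 f1) as [[_ [P11 P12]] [_ O1]].
  destruct (Hprof R2 f2) as [[_ [P21 P22]] [_ O2]].
  assert (dc : m1 <= k -> dist_in fam (sI E F, sU E' F')).
  { intros h. exists R1, R2; split; [auto|split; [auto|]]. right. split.
    - destruct (O1 _ sc (ex_intro _ m1 (conj (proj2 (Nat.lt_succ_r _ _) h) o1))) as [H|H]; auto.
      exfalso; exact (P12 _ _ r1a r1b H).
    - destruct (O2 _ sc (ex_intro _ m1 (conj (proj2 (Nat.lt_succ_r _ _) h) o1))) as [H|H]; auto.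
      exfalso. refine (P21 (E, E') _ _ r2a H). unfold sep_le, sI, sU; simpl; tauto. }
  assert (dd : m2 <= k -> dist_in fam (sU E F, sI E' F')).
  { intros h. exists R1, R2; split; [auto|split; [auto|]]. right. split.
    - destruct (O1 _ sd (ex_intro _ m2 (conj (proj2 (Nat.lt_succ_r _ _) h) o2))) as [H|H]; auto.
      exfalso. refine (P11 (E', E) (sI E' F', sU E F) _ r1a H).
      unfold sep_le, sI, sU; simpl; tauto.
    - destruct (O2 _ sd (ex_intro _ m2 (conj (proj2 (Nat.lt_succ_r _ _) h) o2))) as [H|H]; auto.
      exfalso; exact (P22 _ _ r2a r2b H). }
  destruct Hk as [_ Hmin].
  assert (m1 <= k /\ m2 <= k) as [h1 h2].
  { destruct (Nat.le_gt_cases m1 k), (Nat.le_gt_cases m2 k); try lia.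
    - specialize (Hmin _ _ sc o1 (dc ltac:(lia))); lia.
    - specialize (Hmin _ _ sd o2 (dd ltac:(lia))); lia. }
  split; split; auto; split; eauto.
Qed.

Theorem lemma2p6 (V : Type) (adj : V -> V -> Prop)
  (fam : (sepT V -> Prop) -> Prop) (k : nat)
  (Hprof : forall P, fam P -> l_profile adj (S k) P)
  (Hdist : pairwise_distinguishable adj fam)
  (Hk : is_kappa adj fam k)
  (A1 A2 B1 B2 : vset V)
  (HA : R_set adj k fam (A1, A2))
  (HB : R_set adj k fam (B1, B2)) :
  exists (b c : bool),
    let E  := if b then A1 else A2 in
    let E' := if b then A2 else A1 in
    let F  := if c then B1 else B2 in
    let F' := if c then B2 else B1 in
    R_set adj k fam (sI E F, sU E' F') /\
    R_set adj k fam (sU E F, sI E' F').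
Proof.
  destruct HA as [sA [[a [ha oA]] [P [P' [fP [fP' dA]]]]]].
  destruct HB as [sB [[b [hb oB]] [Q [Q' [fQ [fQ' dB]]]]]].
  assert (sA' : is_sep adj (A2, A1)) by exact (is_sep_inv V adj (A1, A2) sA).
  assert (sB' : is_sep adj (B2, B1)) by exact (is_sep_inv V adj (B1, B2) sB).
  assert (oA' : order_eq (A2, A1) a).
  { destruct oA as [l [h1 [h2 h3]]]; exists l; split; auto; split; auto;
    intros x; simpl in *; rewrite <- h3; tauto. }
  assert (oB' : order_eq (B2, B1) b).
  { destruct oB as [l [h1 [h2 h3]]]; exists l; split; auto; split; auto;
    intros x; simpl in *; rewrite <- h3; tauto. }
  assert (orA : forall R, fam R -> R (A1, A2) \/ R (A2, A1)).
  { intros R fR; destruct (Hprof R fR) as [_ [_ O]]; apply (O (A1, A2) sA).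
    exists a; split; [lia|auto]. }
  assert (orB : forall R, fam R -> R (B1, B2) \/ R (B2, B1)).
  { intros R fR; destruct (Hprof R fR) as [_ [_ O]]; apply (O (B1, B2) sB).
    exists b; split; [lia|auto]. }
  assert (exists Pa Pb, fam Pa /\ fam Pb /\ Pa (A1, A2) /\ Pb (A2, A1)) as [Pa [Pb [fa [fb [pa pb]]]]].
  { destruct dA as [[h1 h2]|[h1 h2]]; [exists P, P'|exists P', P]; auto. }
  assert (exists Qa Qb, fam Qa /\ fam Qb /\ Qa (B1, B2) /\ Qb (B2, B1)) as [Qa [Qb [ga [gb [qa qb]]]]].
  { destruct dB as [[h1 h2]|[h1 h2]]; [exists Q, Q'|exists Q', Q]; auto. }
  (* big region (A1,B1) for R1 & (A2,B2) for R2 : b=true,c=true *)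
  assert (C11 : forall R1 R2, fam R1 -> fam R2 -> R1 (A2, A1) -> R1 (B2, B1) ->
             R2 (A1, A2) -> R2 (B1, B2) -> exists b c : bool,
    let E  := if b then A1 else A2 in let E' := if b then A2 else A1 in
    let F  := if c then B1 else B2 in let F' := if c then B2 else B1 in
    R_set adj k fam (sI E F, sU E' F') /\ R_set adj k fam (sU E F, sI E' F')).
  { intros R1 R2 h1 h2 h3 h4 h5 h6; exists true, true; cbv zeta; simpl.
    exact (main_corner V adj fam k Hprof Hk A1 A2 B1 B2 a b sA sB oA oB ha hb R1 R2 h1 h2 h3 h4 h5 h6). }
  assert (C12 : forall R1 R2, fam R1 -> fam R2 -> R1 (A2, A1) -> R1 (B1, B2) ->
             R2 (A1, A2) -> R2 (B2, B1) -> exists b c : bool,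
    let E  := if b then A1 else A2 in let E' := if b then A2 else A1 in
    let F  := if c then B1 else B2 in let F' := if c then B2 else B1 in
    R_set adj k fam (sI E F, sU E' F') /\ R_set adj k fam (sU E F, sI E' F')).
  { intros R1 R2 h1 h2 h3 h4 h5 h6; exists true, false; cbv zeta; simpl.
    exact (main_corner V adj fam k Hprof Hk A1 A2 B2 B1 a b sA sB' oA oB' ha hb R1 R2 h1 h2 h3 h4 h5 h6). }
  destruct (orB Pa fa) as [pa2|pa2], (orB Pb fb) as [pb2|pb2].
  - (* Pa (A2 big, B2 big), Pb (A1 big, B2 big) ; Qb has B1 big *)
    destruct (orA Qb gb) as [q|q].
    + apply (C12 Pb Qb); auto.
    + apply (C11 Qb Pa); auto.
  - apply (C11 Pb Pa); auto.
  - apply (C12 Pb Pa); auto.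
  - (* both B1 big; Qa has B2 big *)
    destruct (orA Qa ga) as [q|q].
    + apply (C11 Pb Qa); auto.
    + apply (C12 Qa Pa); auto.
Qed.
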